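(* Let $A$ be a nonzero $n\times n$ matrix over $\mathbb{C}$ (or $\mathbb{R}$). Then $A^2\otimes A=A\otimes A^2$ if and only if $A^2=\mu A$ for some scalar $\mu$.
   Context: Here $\otimes$ denotes the Kronecker product of matrices: for $A=[a_{ij}]$, $A\otimes B$ is the block matrix whose $(i,j)$ block is $a_{ij}B$. *)

(* Defs.v *)
From mathcomp Require Import all_boot all_order all_algebra.
From mathcomp Require Export mxtens.
(* Kronecker product: mxtens.tensmx, notation A *t B, with
   (A *t B) (i*p+k) (j*q+l) = A i j * B k l  (block (i,j) is a_ij B). *)

(* Main.v *)
Require Import Defs.
From mathcomp Require Import all_boot all_order all_algebra.
From mathcomp Require Import mxtens.
Import GRing.Theory Num.Theory.
Local Open Scope ring_scope.
Theorem lemma2p6 (R : numFieldType) (n : nat) (A : 'M[R]_n) :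
  A != 0 ->
  ((A *m A) *t A = A *t (A *m A) <-> exists mu : R, A *m A = mu *: A).
Proof.
move=> A0; split; last first.
  move=> [mu ->]; apply/matrixP=> i j; rewrite !mxE.
  by rewrite mulrCA mulrA.
move=> H.
have [k [l Akl]] : exists k l, A k l != 0.
  have /existsP[k /existsP[l Akl]] : [exists k, [exists l, A k l != 0]].
    apply: contraR A0 => /existsPn nz; apply/eqP/matrixP => i j.
    by rewrite mxE; move/existsPn: (nz i) => /(_ j)/negPn/eqP.
  by exists k, l.
exists ((A *m A) k l / A k l); apply/matrixP=> i j.
have := congr1 (fun M : 'M[R]_(n * n) => M (mxtens_index (i, k)) (mxtens_index (j, l))) H.
rewrite /= !tensmxE => E.
by rewrite [RHS]mxE; apply/(mulIf Akl); rewrite E mulrAC divfK // mulrC.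
Qed.
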